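(* The set $Q=\{2^k+k;\,k\ge0\}$ is a Kazhdan set in $\mathbb Z$, and there exist irrational numbers $\theta$ such that $\{e^{2i\pi n\theta};\,n\in Q\}$ is not dense in $\mathbb T$. In particular, there is no enumeration $(m_k)_{k\ge1}$ of the elements of $Q$ such that $(e^{2i\pi m_k\theta})_{k\ge1}$ is equidistributed in $\mathbb T$ for every irrational $\theta$.
   Context: A subset $Q$ is a Kazhdan set in $\mathbb Z$ if there exists $\varepsilon>0$ such that every unitary representation $\pi$ of $\mathbb Z$ having a vector $x$ with $\sup_{n\in Q}\|\pi(n)x-x\|<\varepsilon\|x\|$ has a non-zero $\mathbb Z$-invariant vector. Equidistribution in $\mathbb T$ is in the sense of Weyl. *)

(* Defs.v *)
From Stdlib Require Import Reals ZArith.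
Open Scope R_scope.

(** A complex Hilbert space is presented as its underlying real vector space
    with the real inner product Re<.,.>, together with the operator J of
    multiplication by the imaginary unit i (so (a+ib)x = a x + b (J x)).
    The complex inner product is <x,y> = inner x y + i inner x (J y) (up to
    convention); the norm is sqrt (inner x x), which is the complex norm. *)
Class CHilbert (H : Type) := {
  hzero : H;
  hadd : H -> H -> H;
  hopp : H -> H;
  hscal : R -> H -> H;
  hJ : H -> H;
  hinner : H -> H -> R;
  hadd_assoc : forall x y z, hadd x (hadd y z) = hadd (hadd x y) z;
  hadd_comm : forall x y, hadd x y = hadd y x;
  hadd_zero : forall x, hadd x hzero = x;
  hadd_opp : forall x, hadd x (hopp x) = hzero;
  hscal_assoc : forall a b x, hscal a (hscal b x) = hscal (a * b) x;
  hscal_one : forall x, hscal 1 x = x;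
  hscal_distr_l : forall a x y, hscal a (hadd x y) = hadd (hscal a x) (hscal a y);
  hscal_distr_r : forall a b x, hscal (a + b) x = hadd (hscal a x) (hscal b x);
  hinner_sym : forall x y, hinner x y = hinner y x;
  hinner_add : forall x y z, hinner (hadd x y) z = hinner x z + hinner y z;
  hinner_scal : forall a x y, hinner (hscal a x) y = a * hinner x y;
  hinner_pos : forall x, 0 <= hinner x x;
  hinner_def : forall x, hinner x x = 0 -> x = hzero;
  hJ_add : forall x y, hJ (hadd x y) = hadd (hJ x) (hJ y);
  hJ_scal : forall a x, hJ (hscal a x) = hscal a (hJ x);
  hJ_J : forall x, hJ (hJ x) = hopp x;
  hJ_inner : forall x y, hinner (hJ x) (hJ y) = hinner x y;
  hcomplete : forall u : nat -> H,
    (forall e, 0 < e -> exists N, forall p q, (N <= p)%nat -> (N <= q)%nat ->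
        sqrt (hinner (hadd (u p) (hopp (u q))) (hadd (u p) (hopp (u q)))) < e) ->
    exists l, forall e, 0 < e -> exists N, forall n, (N <= n)%nat ->
        sqrt (hinner (hadd (u n) (hopp l)) (hadd (u n) (hopp l))) < e
}.

Definition hnorm {H} `{CHilbert H} (x : H) : R := sqrt (hinner x x).
Definition hsub {H} `{CHilbert H} (x y : H) : H := hadd x (hopp y).

(** Continuity is automatic since Z is discrete. *)
Definition unitary_rep {H} `{CHilbert H} (pi : Z -> H -> H) : Prop :=
  (forall x, pi 0%Z x = x) /\
  (forall m n x, pi (m + n)%Z x = pi m (pi n x)) /\
  (forall n x y, pi n (hadd x y) = hadd (pi n x) (pi n y)) /\
  (forall n a x, pi n (hscal a x) = hscal a (pi n x)) /\
  (forall n x, pi n (hJ x) = hJ (pi n x)) /\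
  (forall n x y, hinner (pi n x) (pi n y) = hinner x y).

(** Kazhdan set in Z.  "sup_{n in Q} ||pi(n)x - x|| < eps ||x||" is written
    as: there is delta < eps ||x|| bounding all ||pi(n)x - x||, n in Q. *)
Definition Kazhdan_set (Q : Z -> Prop) : Prop :=
  exists eps, 0 < eps /\
    forall (H : Type) (HS : CHilbert H) (pi : Z -> H -> H),
      unitary_rep pi ->
      (exists x : H, exists delta, delta < eps * hnorm x /\
          forall n, Q n -> hnorm (hsub (pi n x) x) <= delta) ->
      exists v : H, v <> hzero /\ forall n, pi n v = v.

Definition Qset (n : Z) : Prop :=
  exists k : nat, n = (2 ^ (Z.of_nat k) + Z.of_nat k)%Z.

Definition irrational (x : R) : Prop :=
  ~ exists p q : Z, q <> 0%Z /\ x = IZR p / IZR q.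

Definition Tdist (a b : R) : R :=
  sqrt ((cos (2 * PI * a) - cos (2 * PI * b)) ^ 2
      + (sin (2 * PI * a) - sin (2 * PI * b)) ^ 2).

Definition dense_in_T (Q : Z -> Prop) (theta : R) : Prop :=
  forall t r, 0 < r -> exists n, Q n /\ Tdist (IZR n * theta) t < r.

Fixpoint count_in (u : nat -> R) (a b : R) (N : nat) : nat :=
  match N with
  | O => O
  | S N' => (count_in u a b N' +
             if Rle_dec a (frac_part (u N')) then
               if Rlt_dec (frac_part (u N')) b then 1 else 0
             else 0)%nat
  end.

(** Weyl equidistribution of (e^{2 i pi u_k})_k in T, i.e. of (u_k) mod 1. *)
Definition equidistributed (u : nat -> R) : Prop :=
  forall a b, 0 <= a -> a <= b -> b <= 1 ->
    Un_cv (fun N => INR (count_in u a b N) / INR N) (b - a).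

Definition enumeration (Q : Z -> Prop) (m : nat -> Z) : Prop :=
  (forall k, Q (m k)) /\
  (forall k l, m k = m l -> k = l) /\
  (forall n, Q n -> exists k, m k = n).

(* Main.v *)
Require Import Defs.
From Stdlib Require Import Reals ZArith Lra Lia List Classical ClassicalEpsilon.
Import ListNotations.
Open Scope R_scope.

Lemma hadd_0l {H} `{CHilbert H} (x : H) : hadd hzero x = x.
Proof. rewrite hadd_comm; apply hadd_zero. Qed.

Lemma hopp_unique {H} `{CHilbert H} (x y : H) : hadd x y = hzero -> y = hopp x.
Proof.
  intro E.
  rewrite <- (hadd_zero y), <- (hadd_opp x), hadd_assoc, (hadd_comm y x), E.
  apply hadd_0l.
Qed.

Lemma hscal_0 {H} `{CHilbert H} (x : H) : hscal 0 x = hzero.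
Proof.
  assert (E : hscal 0 x = hadd (hscal 0 x) (hscal 0 x)).
  { rewrite <- hscal_distr_r. f_equal. ring. }
  rewrite <- (hadd_opp (hscal 0 x)). rewrite E at 2.
  rewrite <- hadd_assoc, hadd_opp, hadd_zero. reflexivity.
Qed.

Lemma opp_scal {H} `{CHilbert H} (x : H) : hopp x = hscal (-1) x.
Proof.
  symmetry; apply hopp_unique.
  rewrite <- (hscal_one x) at 1. rewrite <- hscal_distr_r.
  replace (1 + -1) with 0 by ring. apply hscal_0.
Qed.

Lemma inner_addr {H} `{CHilbert H} (x y z : H) :
  hinner x (hadd y z) = hinner x y + hinner x z.
Proof. rewrite hinner_sym, hinner_add, (hinner_sym y), (hinner_sym z). reflexivity. Qed.

Lemma inner_scalr {H} `{CHilbert H} a (x y : H) :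
  hinner x (hscal a y) = a * hinner x y.
Proof. rewrite hinner_sym, hinner_scal, (hinner_sym y). reflexivity. Qed.

Ltac hexp := unfold hsub in *; rewrite ?opp_scal in *;
  repeat rewrite ?hinner_add, ?inner_addr, ?hinner_scal, ?inner_scalr in *.

Lemma NaddLe {H} `{CHilbert H} (a b : H) :
  hinner (hadd a b) (hadd a b) <= 2 * hinner a a + 2 * hinner b b.
Proof.
  pose proof (hinner_pos (hsub a b)). pose proof (hinner_sym a b). hexp. lra.
Qed.

Lemma Nsub_sym {H} `{CHilbert H} (a b : H) :
  hinner (hsub a b) (hsub a b) = hinner (hsub b a) (hsub b a).
Proof. pose proof (hinner_sym a b). hexp. lra. Qed.

Lemma par_id {H} `{CHilbert H} (a b : H) :
  hinner (hsub a b) (hsub a b) = 2 * hinner a a + 2 * hinner b b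
    - 4 * hinner (hscal (/2) (hadd a b)) (hscal (/2) (hadd a b)).
Proof. pose proof (hinner_sym a b). hexp. field_simplify. lra. Qed.

Lemma sub_chain {H} `{CHilbert H} (u v w : H) : hadd (hsub u v) (hsub v w) = hsub u w.
Proof.
  unfold hsub. rewrite <- hadd_assoc. f_equal.
  rewrite hadd_assoc, (hadd_comm (hopp v) v), hadd_opp. apply hadd_0l.
Qed.

Lemma sub_eq0 {H} `{CHilbert H} (u v : H) : hsub u v = hzero -> u = v.
Proof.
  unfold hsub; intro E.
  rewrite <- (hadd_zero u), <- (hadd_opp v), (hadd_comm v (hopp v)), hadd_assoc, E, hadd_0l.
  reflexivity.
Qed.

Lemma hopp0 {H} `{CHilbert H} : hopp (hzero : H) = hzero.
Proof. symmetry; apply hopp_unique; apply hadd_zero. Qed.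


Lemma rep_facts {H} `{CHilbert H} (pi : Z -> H -> H) : unitary_rep pi ->
  (forall x, pi 0%Z x = x) /\
  (forall m n x, pi (m + n)%Z x = pi m (pi n x)) /\
  (forall n x y, pi n (hsub x y) = hsub (pi n x) (pi n y)) /\
  (forall n a x, pi n (hscal a x) = hscal a (pi n x)) /\
  (forall n x y, pi n (hadd x y) = hadd (pi n x) (pi n y)) /\
  (forall n x, hinner (pi n x) (pi n x) = hinner x x).
Proof.
  intros (p0 & padd & plin & pscal & _ & pin).
  repeat split; auto.
  intros n x y. unfold hsub. rewrite plin, !opp_scal, pscal. reflexivity.
Qed.

Lemma sqrt_lt_sq a e : 0 <= a -> sqrt a < e -> a < e * e.
Proof.
  intros Ha Hs. pose proof (sqrt_sqrt a Ha). pose proof (sqrt_pos a). nra.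
Qed.

Lemma zero_of_small a : 0 <= a -> (forall e, 0 < e -> a <= e) -> a = 0.
Proof.
  intros H0 He. destruct (Req_dec a 0); auto.
  assert (0 < a) by lra. specialize (He (a/2)). lra.
Qed.

Lemma invariant_vector {H} `{CHilbert H} (pi : Z -> H -> H) (x : H) (c : R) :
  unitary_rep pi -> 0 < c -> (forall m, c <= hinner (pi m x) x) ->
  exists v, v <> hzero /\ forall n, pi n v = v.
Proof.
  intros Hpi Hc Hx.
  destruct (rep_facts pi Hpi) as (p0 & padd & psub & pscal & plin & pin).
  set (C := fun y : H => forall m, c <= hinner (pi m y) x).
  assert (Cmid : forall a b, C a -> C b -> C (hscal (/2) (hadd a b))).
  { intros a b Ha Hb m. rewrite pscal, plin, hinner_scal, hinner_add.
    specialize (Ha m); specialize (Hb m). lra. }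
  assert (Cpi : forall a, C a -> C (pi 1%Z a)).
  { intros a Ha m. rewrite <- padd. apply Ha. }
  set (E := fun r => exists y, C y /\ r = - hinner y y).
  assert (Eb : bound E).
  { exists 0. intros r (y & _ & ->). pose proof (hinner_pos y). lra. }
  assert (Ene : exists r, E r) by (exists (- hinner x x); exists x; split; [exact Hx | reflexivity]).
  destruct (completeness E Eb Ene) as [ml [Hub Hlub]].
  set (d2 := - ml).
  assert (Cge : forall y, C y -> d2 <= hinner y y).
  { intros y Hy. assert (HE : E (- hinner y y)) by (exists y; auto). apply Hub in HE. unfold d2; lra. }
  assert (Happ : forall n : nat, exists y, C y /\ hinner y y < d2 + / (INR n + 1)).
  { intro n. assert (Hpos : 0 < / (INR n + 1)) by (apply Rinv_0_lt_compat; pose proof (pos_INR n); lra).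
    destruct (classic (exists y, C y /\ hinner y y < d2 + / (INR n + 1))) as [Hy|Hy]; auto.
    exfalso.
    assert (HU : is_upper_bound E (ml - / (INR n + 1))).
    { intros r (y & Cy & ->). destruct (Rlt_le_dec (hinner y y) (d2 + / (INR n + 1))).
      - exfalso; apply Hy; exists y; auto.
      - unfold d2 in *; lra. }
    apply Hlub in HU. lra. }
  set (ys := fun n => proj1_sig (constructive_indefinite_description _ (Happ n))).
  assert (Hys : forall n, C (ys n) /\ hinner (ys n) (ys n) < d2 + / (INR n + 1)).
  { intro n. unfold ys. destruct (constructive_indefinite_description _ (Happ n)); auto. }
  assert (Hcau : forall p q, hinner (hsub (ys p) (ys q)) (hsub (ys p) (ys q))
                     <= 2 * / (INR p + 1) + 2 * / (INR q + 1)).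
  { intros p q. rewrite par_id.
    destruct (Hys p) as [Cp Np]; destruct (Hys q) as [Cq Nq].
    pose proof (Cge _ (Cmid _ _ Cp Cq)). lra. }
  assert (einv : forall eps, 0 < eps -> exists N : nat, forall n, (N <= n)%nat -> / (INR n + 1) < eps).
  { intros eps He. destruct (archimed_cor1 eps He) as [N [HN HN0]]. exists N. intros n Hn.
    apply Rle_lt_trans with (/ INR N); auto. apply Rinv_le_contravar.
    apply lt_0_INR; lia. apply le_INR in Hn. lra. }
  destruct (hcomplete ys) as [z Hz].
  { intros e He. destruct (einv (e * e / 8)) as [N HN]. { apply Rdiv_lt_0_compat; nra. }
    exists N. intros p q Hp Hq. apply Rle_lt_trans with (sqrt (e * e / 2)).
    - apply sqrt_le_1_alt. pose proof (HN p Hp); pose proof (HN q Hq).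
      pose proof (Hcau p q). unfold hsub in *. lra.
    - apply Rlt_le_trans with (sqrt (e * e)).
      + apply sqrt_lt_1_alt. split.
        * apply Rlt_le, Rdiv_lt_0_compat; nra.
        * nra.
      + rewrite sqrt_square; lra. }
  assert (Hz2 : forall e, 0 < e -> exists N, forall n, (N <= n)%nat ->
              hinner (hsub (ys n) z) (hsub (ys n) z) < e).
  { intros e He. destruct (Hz (sqrt e)) as [N HN]. apply sqrt_lt_R0; auto.
    exists N. intros n Hn. specialize (HN n Hn). unfold hsub in HN |- *.
    pose proof (sqrt_lt_sq _ _ (hinner_pos _) HN) as HS. rewrite sqrt_sqrt in HS; lra. }
  exists z. split.
  - intro Ez. subst z.
    set (t := (hinner x x + 1) / c).
    assert (Ht : 0 < t) by (unfold t; pose proof (hinner_pos x); apply Rdiv_lt_0_compat; lra).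
    destruct (Hz2 (/ (t * t))) as [N HN]. { apply Rinv_0_lt_compat; nra. }
    specialize (HN N (Nat.le_refl N)).
    unfold hsub in HN. rewrite hopp0, hadd_zero in HN.
    destruct (Hys N) as [CN _]. specialize (CN 0%Z). rewrite p0 in CN.
    pose proof (hinner_pos (hsub (hscal t (ys N)) x)).
    pose proof (hinner_sym (ys N) x).
    hexp.
    assert (t * t * hinner (ys N) (ys N) < 1).
    { apply Rmult_lt_compat_l with (r := t * t) in HN; [|nra].
      rewrite Rinv_r in HN; nra. }
    assert (t * c = hinner x x + 1) by (unfold t; field; lra).
    nra.
  - assert (Hfix : pi 1%Z z = z).
    { apply sub_eq0, hinner_def. apply zero_of_small. apply hinner_pos.
      intros e He.
      destruct (Hz2 (e / 12)) as [N1 HN1]. lra.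
      destruct (einv (e / 32)) as [N2 HN2]. lra.
      set (n := Nat.max N1 N2).
      specialize (HN1 n (Nat.le_max_l _ _)). specialize (HN2 n (Nat.le_max_r _ _)).
      set (y := ys n) in *.
      destruct (Hys n) as [Cy Ny]. fold y in Cy, Ny.
      assert (NB : hinner (hsub (pi 1%Z y) y) (hsub (pi 1%Z y) y) <= 4 * / (INR n + 1)).
      { rewrite par_id. pose proof (Cge _ (Cmid _ _ (Cpi _ Cy) Cy)). rewrite pin. lra. }
      assert (NA : hinner (hsub (pi 1%Z z) (pi 1%Z y)) (hsub (pi 1%Z z) (pi 1%Z y))
                   = hinner (hsub y z) (hsub y z)).
      { rewrite <- psub, pin, Nsub_sym. reflexivity. }
      rewrite <- (sub_chain (pi 1%Z z) y z), <- (sub_chain (pi 1%Z z) (pi 1%Z y) y).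
      pose proof (NaddLe (hadd (hsub (pi 1%Z z) (pi 1%Z y)) (hsub (pi 1%Z y) y)) (hsub y z)).
      pose proof (NaddLe (hsub (pi 1%Z z) (pi 1%Z y)) (hsub (pi 1%Z y) y)).
      lra. }
    assert (Hnat : forall k, pi (Z.of_nat k) z = z).
    { induction k. apply p0. rewrite Nat2Z.inj_succ, <- Z.add_1_l, padd, IHk. exact Hfix. }
    intro n. destruct (Z_le_gt_dec 0 n).
    + rewrite <- (Z2Nat.id n l). apply Hnat.
    + replace n with (- Z.of_nat (Z.to_nat (- n)))%Z by lia.
      transitivity (pi (- Z.of_nat (Z.to_nat (- n)))%Z (pi (Z.of_nat (Z.to_nat (- n))) z)).
      * rewrite Hnat. reflexivity.
      * rewrite <- padd, Z.add_opp_diag_l. apply p0.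
Qed.

Lemma Qn k : Qset (2 ^ Z.of_nat k + Z.of_nat k)%Z.
Proof. exists k; reflexivity. Qed.

Lemma kazhdan : Kazhdan_set Qset.
Proof.
  exists (1/3). split; [lra|].
  intros H HS pi Hpi [x [delta [Hd Hb]]].
  destruct (rep_facts pi Hpi) as (p0 & padd & psub & pscal & plin & pin).
  set (N := fun v : H => hinner v v).
  assert (Hd0 : 0 <= delta).
  { assert (Q1 : Qset 1%Z) by (exists 0%nat; reflexivity).
    specialize (Hb 1%Z Q1). unfold hnorm in Hb. pose proof (sqrt_pos (hinner (hsub (pi 1%Z x) x) (hsub (pi 1%Z x) x))). lra. }
  assert (HQ : forall n, Qset n -> N (hsub (pi n x) x) <= delta * delta).
  { intros n Hn. specialize (Hb n Hn). unfold hnorm in Hb. unfold N.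
    pose proof (sqrt_sqrt _ (hinner_pos (hsub (pi n x) x))).
    pose proof (sqrt_pos (hinner (hsub (pi n x) x) (hsub (pi n x) x))). nra. }
  assert (Hneg : forall c, N (hsub (pi (- c)%Z x) x) = N (hsub (pi c x) x)).
  { intro c. unfold N.
    assert (E : hsub (pi (- c)%Z x) x = pi (- c)%Z (hsub x (pi c x))).
    { rewrite psub, <- padd, Z.add_opp_diag_l, p0. reflexivity. }
    rewrite E, pin, Nsub_sym. reflexivity. }
  assert (Hdbl : forall b, Qset b -> N (hsub (pi (2 * b)%Z x) x) <= 4 * (delta * delta)).
  { intros b Hbq.
    assert (E : hsub (pi (2 * b)%Z x) x = hadd (pi b (hsub (pi b x) x)) (hsub (pi b x) x)).
    { rewrite psub, <- padd. replace (b + b)%Z with (2 * b)%Z by ring.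
      symmetry; apply sub_chain. }
    unfold N; rewrite E.
    pose proof (NaddLe (pi b (hsub (pi b x) x)) (hsub (pi b x) x)).
    rewrite pin in H0. pose proof (HQ b Hbq). unfold N in H1. lra. }
  assert (Hle1 : forall m, (m <= 1)%Z -> N (hsub (pi m x) x) <= 10 * (delta * delta)).
  { intros m Hm.
    set (k := Z.to_nat (1 - m)).
    set (a := (2 ^ Z.of_nat (S k) + Z.of_nat (S k))%Z).
    set (b := (2 ^ Z.of_nat k + Z.of_nat k)%Z).
    assert (Em : m = (- (2 * b) + a)%Z).
    { unfold a, b. rewrite Nat2Z.inj_succ, Z.pow_succ_r by lia. unfold k. rewrite Z2Nat.id; lia. }
    assert (E : hsub (pi m x) x = hadd (pi (- (2 * b))%Z (hsub (pi a x) x)) (hsub (pi (- (2*b))%Z x) x)).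
    { rewrite psub, <- padd, <- Em. symmetry; apply sub_chain. }
    unfold N; rewrite E.
    pose proof (NaddLe (pi (- (2 * b))%Z (hsub (pi a x) x)) (hsub (pi (- (2*b))%Z x) x)).
    rewrite pin in H0.
    pose proof (HQ a (Qn (S k))). pose proof (Hdbl b (Qn k)). pose proof (Hneg (2 * b)%Z).
    unfold N in *. lra. }
  assert (Hall : forall m, N (hsub (pi m x) x) <= 10 * (delta * delta)).
  { intro m. destruct (Z_le_gt_dec m 1). auto.
    rewrite <- (Z.opp_involutive m), Hneg. apply Hle1. lia. }
  apply (invariant_vector pi x (hinner x x - 5 * (delta * delta)) Hpi).
  - unfold hnorm in Hd. pose proof (sqrt_sqrt _ (hinner_pos x)).
    pose proof (sqrt_pos (hinner x x)). nra.
  - intro m. specialize (Hall m). unfold N in Hall.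
    pose proof (hinner_sym (pi m x) x).
    hexp. rewrite pin in Hall. lra.
Qed.

Definition inE (a : nat) (e : R * R) : Prop := fst e < INR a < fst e + snd e.
Definition inb (a : nat) (e : R * R) : bool :=
  if Rlt_dec (fst e) (INR a) then if Rlt_dec (INR a) (fst e + snd e) then true else false else false.
Fixpoint cnt (f : nat -> bool) (N : nat) : nat :=
  match N with O => O | S n => (cnt f n + (if f n then 1 else 0))%nat end.
Fixpoint sumlen (l : list (R * R)) : R :=
  match l with nil => 0 | e :: l' => snd e + 1 + sumlen l' end.

Lemma inb_true a e : inb a e = true <-> inE a e.
Proof.
  unfold inb, inE. destruct (Rlt_dec (fst e) (INR a)); destruct (Rlt_dec (INR a) (fst e + snd e));
  split; intro; try discriminate; try tauto; lra.
Qed.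

Lemma cnt_single e N : 0 <= snd e -> INR (cnt (fun a => inb a e) N) <= snd e + 1.
Proof.
  intro Hl.
  assert (forall N, INR (cnt (fun a => inb a e) N) <= snd e + 1 /\
                    INR (cnt (fun a => inb a e) N) <= Rmax 0 (INR N - fst e)).
  { induction N0 as [|n [IH1 IH2]]; cbn [cnt].
    - simpl. split; [lra|]. apply Rmax_l.
    - destruct (inb n e) eqn:E.
      + apply inb_true in E. unfold inE in E. rewrite plus_INR, (S_INR n). change (INR 1) with 1.
        rewrite Rmax_right in IH2 by lra. rewrite Rmax_right by lra. split; lra.
      + rewrite Nat.add_0_r, S_INR. split; auto.
        apply Rle_trans with (1 := IH2). apply Rle_max_compat_l; lra. }
  apply H.
Qed.

Lemma cnt_or f g N : (cnt (fun a => orb (f a) (g a)) N <= cnt f N + cnt g N)%nat.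
Proof. induction N; simpl; auto. destruct (f N), (g N); simpl; lia. Qed.

Lemma cnt_ext f g N : (forall a, f a = g a) -> cnt f N = cnt g N.
Proof. intro E. induction N; simpl; auto. rewrite IHN, E. reflexivity. Qed.

Lemma cnt_list l N : (forall e, In e l -> 0 <= snd e) ->
  INR (cnt (fun a => existsb (inb a) l) N) <= sumlen l.
Proof.
  induction l as [|e l IH]; intro Hp; simpl.
  - assert (cnt (fun _ => false) N = 0%nat) by (induction N; simpl; auto; lia).
    rewrite H; simpl; lra.
  - apply Rle_trans with (INR (cnt (fun a => inb a e) N + cnt (fun a => existsb (inb a) l) N)).
    + apply le_INR, cnt_or.
    + rewrite plus_INR. pose proof (cnt_single e N (Hp e (or_introl eq_refl))).
      specialize (IH (fun e' H => Hp e' (or_intror H))). lra.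
Qed.

Lemma cnt_lt_exists f N : (cnt f N < N)%nat -> exists a, (a < N)%nat /\ f a = false.
Proof.
  induction N; simpl; intro H. lia.
  destruct (f N) eqn:E.
  - destruct IHN as [a [Ha Hf]]. lia. exists a; split; auto.
  - exists N; split; auto.
Qed.

Lemma avoid l N : (forall e, In e l -> 0 <= snd e) -> sumlen l < INR N ->
  exists a, (a < N)%nat /\ forall e, In e l -> ~ inE a e.
Proof.
  intros Hp Hs.
  pose proof (cnt_list l N Hp).
  destruct (cnt_lt_exists (fun a => existsb (inb a) l) N) as [a [Ha Hf]].
  { apply INR_lt. lra. }
  exists a; split; auto. intros e He Hin.
  apply inb_true in Hin.
  assert (existsb (inb a) l = true) by (apply existsb_exists; exists e; auto).
  congruence.
Qed.

Definition rr : R := / 4096.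
Definition nk (k : nat) : R := 2 ^ k + INR k.
Definition mm (d : nat) : nat := (7 + 6 * d)%nat.
Definition goodk (k : nat) (x : R) : Prop := forall j : Z, rr <= Rabs (nk k * x - IZR j - / 2).
Definition Inv (d : nat) (A : Z) : Prop :=
  (forall k, (k + 7 <= mm d)%nat -> forall x, IZR A / 2 ^ mm d <= x <= (IZR A + 1) / 2 ^ mm d -> goodk k x) /\
  (forall p q : Z, (1 <= q)%Z -> (q <= Z.of_nat d)%Z ->
      ~ (IZR A / 2 ^ mm d <= IZR p / IZR q <= (IZR A + 1) / 2 ^ mm d)).

Lemma pow2_pos n : 0 < 2 ^ n.
Proof. apply pow_lt; lra. Qed.

Lemma pow_gt n : INR n < 2 ^ n.
Proof.
  induction n. simpl; lra.
  rewrite S_INR. simpl.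
  assert (1 <= 2 ^ n) by (apply pow_R1_Rle; lra). lra.
Qed.

Lemma nk_ge k : 2 ^ k <= nk k.
Proof. unfold nk. pose proof (pos_INR k). lra. Qed.

Lemma nk_lt k m : (k < m)%nat -> nk k < 2 ^ m.
Proof.
  intro H. unfold nk.
  assert (2 ^ S k <= 2 ^ m) by (apply Rle_pow; [lra | lia]).
  simpl in H0. pose proof (pow_gt k). lra.
Qed.

Lemma up_bounds y j : y < IZR j -> IZR j < y + 2 -> j = up y \/ j = (up y + 1)%Z.
Proof.
  intros H1 H2. destruct (archimed y) as [A1 A2].
  assert (IZR (up y) - 1 < IZR j) by lra.
  assert (IZR j < IZR (up y) + 2) by lra.
  rewrite <- minus_IZR in H. rewrite <- plus_IZR in H0.
  apply lt_IZR in H. apply lt_IZR in H0. lia.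
Qed.

Lemma Inv0 : Inv 0 0%Z.
Proof.
  split.
  - intros k Hk x Hx j. unfold mm in *. assert (k = 0%nat) by lia. subst k.
    unfold nk. simpl in *. unfold rr.
    destruct (Z_le_gt_dec 0 j) as [Hj|Hj].
    + apply IZR_le in Hj. rewrite Rabs_left; lra.
    + assert (IZR j <= -1) by (apply IZR_le; lia). rewrite Rabs_right; lra.
  - intros p q H1 H2. simpl in H2. lia.
Qed.

Lemma w_bound m i : (1 <= i <= 6)%nat -> (i <= m)%nat ->
  64 * 2 ^ m / nk (m - i) <= 64 * 2 ^ i.
Proof.
  intros Hi Hm.
  pose proof (nk_ge (m - i)). pose proof (pow2_pos (m - i)). pose proof (pow2_pos i).
  replace (2 ^ m) with (2 ^ (m - i) * 2 ^ i) by (rewrite <- pow_add; f_equal; lia).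
  apply Rle_trans with (64 * (2 ^ (m - i) * 2 ^ i) / 2 ^ (m - i)).
  - unfold Rdiv. apply Rmult_le_compat_l. nra. apply Rinv_le_contravar; lra.
  - right. field. lra.
Qed.

Lemma step d A : Inv d A -> exists a : nat, (a < 64)%nat /\ Inv (S d) (64 * A + Z.of_nat a)%Z.
Proof.
  intros [Hg Hr].
  set (m := mm d). fold m in Hg, Hr.
  set (P := 2 ^ m).
  assert (HP : 0 < P) by apply pow2_pos.
  assert (Hm7 : (7 <= m)%nat) by (unfold m, mm; lia).
  set (w := fun k => 64 * P / nk k).
  set (ev := fun k (j : Z) => ((IZR j + / 2 - rr) * w k - 64 * IZR A - 1, 2 * rr * w k + 1)).
  set (js := fun k => up (nk k * (IZR A / P) - / 2 - rr)).
  set (evk := fun k => [ev k (js k); ev k (js k + 1)%Z]).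
  set (q := Z.of_nat (S d)).
  set (ps := up (IZR A / P * IZR q - 1)).
  set (evr := fun p : Z => (64 * P * (IZR p / IZR q) - 64 * IZR A - 3 / 2, 2)).
  set (evs := evk (m - 6)%nat ++ evk (m - 5)%nat ++ evk (m - 4)%nat ++ evk (m - 3)%nat
              ++ evk (m - 2)%nat ++ evk (m - 1)%nat ++ [evr ps; evr (ps + 1)%Z]).
  assert (Hnk : forall k, 0 < nk k) by (intro k; pose proof (nk_ge k); pose proof (pow2_pos k); lra).
  assert (Hw : forall k, 0 < w k) by (intro k; unfold w; apply Rdiv_lt_0_compat; [lra | auto]).
  assert (Hrr : 0 < rr) by (unfold rr; lra).
  destruct (avoid evs 64) as [a [Ha Hav]].
  - assert (Hwn : forall k, 0 <= 2 * rr * w k + 1) by (intro k; pose proof (Hw k); nra).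
    intros e He. unfold evs, evk, ev, evr in He. rewrite !in_app_iff in He. simpl in He.
    intuition (subst; simpl; auto; lra).
  - unfold evs, evk, ev, evr. simpl.
    pose proof (w_bound m 6 ltac:(lia) ltac:(lia)).
    pose proof (w_bound m 5 ltac:(lia) ltac:(lia)).
    pose proof (w_bound m 4 ltac:(lia) ltac:(lia)).
    pose proof (w_bound m 3 ltac:(lia) ltac:(lia)).
    pose proof (w_bound m 2 ltac:(lia) ltac:(lia)).
    pose proof (w_bound m 1 ltac:(lia) ltac:(lia)).
    unfold w, P, rr in *. simpl in *. lra.
  - exists a. split; auto.
    assert (Hmm : mm (S d) = (m + 6)%nat) by (unfold m, mm; lia).
    assert (HP64 : 2 ^ mm (S d) = 64 * P) by (rewrite Hmm, pow_add; unfold P; simpl; ring).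
    assert (HIZ : IZR (64 * A + Z.of_nat a) = 64 * IZR A + INR a)
      by (rewrite plus_IZR, mult_IZR, <- INR_IZR_INZ; reflexivity).
    unfold Inv. rewrite HP64, HIZ.
    assert (Ha0 : 0 <= INR a) by apply pos_INR.
    assert (Ha64 : INR a + 1 <= 64) by (assert (Ha63 : INR a <= INR 63) by (apply le_INR; lia); rewrite (INR_IZR_INZ 63) in Ha63; simpl in Ha63; lra).
    assert (Hch : forall x, (64 * IZR A + INR a) / (64 * P) <= x <= (64 * IZR A + INR a + 1) / (64 * P) ->
              (64 * IZR A + INR a <= 64 * P * x <= 64 * IZR A + INR a + 1) /\
              IZR A / P <= x <= (IZR A + 1) / P).
    { intros x [Hx1 Hx2].
      assert (E1 : 64 * IZR A + INR a <= 64 * P * x).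
      { apply Rmult_le_compat_l with (r := 64 * P) in Hx1; [|lra].
        replace (64 * P * ((64 * IZR A + INR a) / (64 * P))) with (64 * IZR A + INR a) in Hx1 by (field; lra). lra. }
      assert (E2 : 64 * P * x <= 64 * IZR A + INR a + 1).
      { apply Rmult_le_compat_l with (r := 64 * P) in Hx2; [|lra].
        replace (64 * P * ((64 * IZR A + INR a + 1) / (64 * P))) with (64 * IZR A + INR a + 1) in Hx2 by (field; lra). lra. }
      split; [lra|]. split.
      - apply Rmult_le_reg_l with (r := 64 * P); [lra|].
        replace (64 * P * (IZR A / P)) with (64 * IZR A) by (field; lra). lra.
      - apply Rmult_le_reg_l with (r := 64 * P); [lra|].
        replace (64 * P * ((IZR A + 1) / P)) with (64 * IZR A + 64) by (field; lra). lra. }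
    split.
    + intros k Hk x Hx j. destruct (Hch x Hx) as [Hu Hxp].
      destruct (le_lt_dec (k + 7) m) as [Hkm|Hkm].
      * apply (Hg k Hkm x Hxp j).
      * apply Rnot_lt_le. intro Hlt.
        assert (Hk' : (k = m - 6 \/ k = m - 5 \/ k = m - 4 \/ k = m - 3 \/ k = m - 2 \/ k = m - 1)%nat)
          by (rewrite Hmm in Hk; lia).
        assert (Hkl : (k < m)%nat) by lia.
        pose proof (nk_lt k m Hkl) as Hc1. fold P in Hc1.
        pose proof (Hnk k) as Hc0.
        set (c := nk k) in *.
        assert (Hcx1 : c * (IZR A / P) <= c * x) by (apply Rmult_le_compat_l; lra).
        assert (Hcx2 : c * x <= c * (IZR A / P) + c / P).
        { replace (c * (IZR A / P) + c / P) with (c * ((IZR A + 1) / P)) by (field; lra).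
          apply Rmult_le_compat_l; lra. }
        assert (HcP : c / P < 1) by (apply Rmult_lt_reg_r with P; [lra|]; unfold Rdiv; rewrite Rmult_assoc, Rinv_l; lra).
        apply Rabs_def2 in Hlt. destruct Hlt as [Hl1 Hl2].
        assert (Hj : j = js k \/ j = (js k + 1)%Z).
        { unfold js; fold c. apply up_bounds; unfold rr in *; lra. }
        assert (Hwc : w k * (c * x) = 64 * P * x) by (unfold w; fold c; field; lra).
        assert (Hin : inE a (ev k j)).
        { unfold inE, ev; simpl. pose proof (Hw k) as Hwk.
          assert ((IZR j + / 2 - rr) * w k < w k * (c * x)) by nra.
          assert (w k * (c * x) < (IZR j + / 2 + rr) * w k) by nra.
          split; nra. }
        apply (Hav (ev k j)); auto.
        unfold evs, evk. rewrite !in_app_iff. simpl.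
        destruct Hj as [-> | ->]; destruct Hk' as [-> | [-> | [-> | [-> | [-> | ->]]]]]; tauto.
    + intros p q' H1 H2 Hin. destruct (Hch _ Hin) as [Hu Hxp].
      destruct (Z.eq_dec q' q) as [Eq|Nq].
      * subst q'.
        assert (Hq0 : 0 < IZR q) by (apply IZR_lt; unfold q; lia).
        assert (HqP : IZR q < P).
        { unfold q. rewrite <- INR_IZR_INZ. apply Rlt_le_trans with (2 ^ S d).
          apply pow_gt. apply Rle_pow; [lra| unfold m, mm; lia]. }
        assert (Hp1 : IZR A / P * IZR q <= IZR p).
        { destruct Hxp as [Hx1 _]. apply Rmult_le_compat_r with (r := IZR q) in Hx1; [|lra].
          replace (IZR p / IZR q * IZR q) with (IZR p) in Hx1 by (field; lra). exact Hx1. }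
        assert (Hp2 : IZR p <= IZR A / P * IZR q + IZR q / P).
        { destruct Hxp as [_ Hx2]. apply Rmult_le_compat_r with (r := IZR q) in Hx2; [|lra].
          replace (IZR p / IZR q * IZR q) with (IZR p) in Hx2 by (field; lra).
          replace (IZR A / P * IZR q + IZR q / P) with ((IZR A + 1) / P * IZR q) by (field; lra). exact Hx2. }
        assert (HqP1 : IZR q / P < 1) by (apply Rmult_lt_reg_r with P; [lra|]; unfold Rdiv; rewrite Rmult_assoc, Rinv_l; lra).
        assert (Hj : p = ps \/ p = (ps + 1)%Z) by (apply up_bounds; lra).
        apply (Hav (evr p)).
        -- unfold evs. rewrite !in_app_iff. simpl. destruct Hj as [-> | ->]; tauto.
        -- unfold inE, evr; simpl. lra.
      * apply (Hr p q' H1); [unfold q in Nq; lia | exact Hxp].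
Qed.

Lemma step_ex d A : exists A', Inv d A ->
  Inv (S d) A' /\ exists a : nat, (a < 64)%nat /\ A' = (64 * A + Z.of_nat a)%Z.
Proof.
  destruct (classic (Inv d A)) as [H|H].
  - destruct (step d A H) as [a [Ha Hi]]. exists (64 * A + Z.of_nat a)%Z. intros _. split; eauto.
  - exists 0%Z. tauto.
Qed.

Definition stepf d A := proj1_sig (constructive_indefinite_description _ (step_ex d A)).

Lemma stepf_spec d A : Inv d A ->
  Inv (S d) (stepf d A) /\ exists a : nat, (a < 64)%nat /\ stepf d A = (64 * A + Z.of_nat a)%Z.
Proof. unfold stepf. destruct (constructive_indefinite_description _ (step_ex d A)); auto. Qed.

Fixpoint F (d : nat) : Z := match d with O => 0%Z | S d' => stepf d' (F d') end.

Lemma F_inv d : Inv d (F d).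
Proof. induction d. apply Inv0. simpl. apply stepf_spec; auto. Qed.

Definition lo d := IZR (F d) / 2 ^ mm d.
Definition hi d := (IZR (F d) + 1) / 2 ^ mm d.

Lemma lo_hi d : lo d <= hi d.
Proof. unfold lo, hi. pose proof (pow2_pos (mm d)). unfold Rdiv. apply Rmult_le_compat_r.
  left; apply Rinv_0_lt_compat; lra. lra. Qed.

Lemma nest d : lo d <= lo (S d) /\ hi (S d) <= hi d.
Proof.
  destruct (stepf_spec d (F d) (F_inv d)) as [_ [a [Ha E]]].
  unfold lo, hi. simpl F. rewrite E.
  assert (Hmm : mm (S d) = (mm d + 6)%nat) by (unfold mm; lia).
  rewrite Hmm, pow_add. set (P := 2 ^ mm d). assert (HP : 0 < P) by apply pow2_pos.
  rewrite plus_IZR, mult_IZR, <- INR_IZR_INZ. simpl (2 ^ 6).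
  assert (Ha0 : 0 <= INR a) by apply pos_INR.
  assert (Ha64 : INR a + 1 <= 64) by (assert (Ha63 : INR a <= INR 63) by (apply le_INR; lia); rewrite (INR_IZR_INZ 63) in Ha63; simpl in Ha63; lra).
  split.
  - apply Rmult_le_reg_l with (r := 64 * P); [lra|].
    replace (64 * P * (IZR (F d) / P)) with (64 * IZR (F d)) by (field; lra).
    replace (64 * P * ((IZR 64 * IZR (F d) + INR a) / (P * (2 * (2 * (2 * (2 * (2 * (2 * 1)))))))))
      with (64 * IZR (F d) + INR a) by (field; lra). lra.
  - apply Rmult_le_reg_l with (r := 64 * P); [lra|].
    replace (64 * P * ((IZR (F d) + 1) / P)) with (64 * IZR (F d) + 64) by (field; lra).
    replace (64 * P * ((IZR 64 * IZR (F d) + INR a + 1) / (P * (2 * (2 * (2 * (2 * (2 * (2 * 1)))))))))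
      with (64 * IZR (F d) + INR a + 1) by (field; lra). lra.
Qed.

Lemma mono d e : (d <= e)%nat -> lo d <= lo e /\ hi e <= hi d.
Proof.
  induction 1. lra. destruct (nest m). lra.
Qed.

Lemma lo_le_hi d e : lo d <= hi e.
Proof.
  destruct (le_lt_dec d e).
  - destruct (mono d e l). pose proof (lo_hi e). lra.
  - destruct (mono e d ltac:(lia)). pose proof (lo_hi d). lra.
Qed.

Lemma good_theta : exists theta, irrational theta /\
  forall k j, rr <= Rabs (nk k * theta - IZR j - / 2).
Proof.
  set (E := fun x => exists d, x = lo d).
  destruct (completeness E) as [th [Hub Hlub]].
  { exists (hi 0). intros x [d ->]. apply lo_le_hi. }
  { exists (lo 0). exists 0%nat. reflexivity. }
  assert (Hin : forall d, lo d <= th <= hi d).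
  { intro d. split. apply Hub. exists d; reflexivity.
    apply Hlub. intros x [e ->]. apply lo_le_hi. }
  exists th. split.
  - intros [p [q [Hq Eq]]].
    assert (Hgen : forall p q, (1 <= q)%Z -> th <> IZR p / IZR q).
    { intros p' q' Hq' E'. destruct (F_inv (Z.to_nat q')) as [_ Hr].
      apply (Hr p' q' Hq' ltac:(lia)). rewrite <- E'. apply Hin. }
    destruct (Z_le_gt_dec 1 q).
    + eapply Hgen; eauto.
    + assert (q < 0)%Z by lia. apply (Hgen (- p)%Z (- q)%Z ltac:(lia)).
      rewrite Eq, !opp_IZR. field. apply not_0_IZR; auto.
  - intros k j. destruct (F_inv k) as [Hg _]. apply (Hg k ltac:(unfold mm; lia)). apply Hin.
Qed.

Lemma IZR_Q k : IZR (2 ^ Z.of_nat k + Z.of_nat k) = nk k.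
Proof. unfold nk. rewrite plus_IZR, <- pow_IZR, <- INR_IZR_INZ. reflexivity. Qed.

Lemma cos_periodZ x (J : Z) : cos (x + 2 * PI * IZR J) = cos x.
Proof.
  destruct (Z_le_gt_dec 0 J).
  - rewrite <- (Z2Nat.id J l), <- INR_IZR_INZ.
    rewrite <- (cos_period x (Z.to_nat J)). f_equal. ring.
  - rewrite <- (cos_period (x + 2 * PI * IZR J) (Z.to_nat (- J))).
    rewrite INR_IZR_INZ, Z2Nat.id by lia. rewrite opp_IZR. f_equal. ring.
Qed.

Lemma Tdist_sq a b : Tdist a b * Tdist a b = 2 - 2 * cos (2 * PI * a - 2 * PI * b).
Proof.
  unfold Tdist. rewrite sqrt_sqrt.
  - rewrite cos_minus. pose proof (sin2_cos2 (2 * PI * a)). pose proof (sin2_cos2 (2 * PI * b)).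
    unfold Rsqr in *.
    set (ca := cos (2 * PI * a)) in *. set (cb := cos (2 * PI * b)) in *.
    set (sa := sin (2 * PI * a)) in *. set (sb := sin (2 * PI * b)) in *.
    assert ((ca - cb) ^ 2 + (sa - sb) ^ 2 = (sa * sa + ca * ca) + (sb * sb + cb * cb) - 2 * (ca * cb + sa * sb)) by ring.
    lra.
  - apply Rplus_le_le_0_compat; apply pow2_ge_0.
Qed.

Lemma cos_bound y : (forall j, rr <= Rabs (y - IZR j - / 2)) ->
  cos (2 * PI * y - 2 * PI * (1 / 2)) <= cos (2 * PI * rr).
Proof.
  intro Hg.
  set (J := Int_part (y - / 2 + / 2)).
  destruct (base_Int_part (y - / 2 + / 2)) as [B1 B2]. fold J in B1, B2.
  set (z := y - IZR J - / 2).
  assert (Hz : -(1/2) <= z < 1/2) by (unfold z; lra).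
  specialize (Hg J). fold z in Hg.
  replace (2 * PI * y - 2 * PI * (1 / 2)) with (2 * PI * z + 2 * PI * IZR J) by (unfold z; field).
  rewrite cos_periodZ.
  assert (E : cos (2 * PI * z) = cos (2 * PI * Rabs z)).
  { destruct (Rle_dec 0 z). rewrite Rabs_right by lra; auto.
    rewrite Rabs_left by lra. rewrite <- cos_neg. f_equal. ring. }
  rewrite E. pose proof PI_RGT_0.
  destruct (Req_dec (Rabs z) rr) as [Eq|Ne].
  - rewrite Eq. lra.
  - left.
    assert (Hlt : rr < Rabs z) by (destruct (Rle_lt_or_eq_dec _ _ Hg); [auto | congruence]).
    assert (Rabs z <= 1/2) by (apply Rabs_le; lra).
    pose proof (Rabs_pos z).
    apply cos_decreasing_1; unfold rr in *; nra.
Qed.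

Lemma part2 th : (forall k j, rr <= Rabs (nk k * th - IZR j - / 2)) -> ~ dense_in_T Qset th.
Proof.
  intros Hg Hd.
  pose proof PI_RGT_0.
  assert (Hc : cos (2 * PI * rr) < 1).
  { rewrite <- cos_0. apply cos_decreasing_1; unfold rr; nra. }
  destruct (Hd (1 / 2) (sqrt (2 - 2 * cos (2 * PI * rr)))) as [n [[k ->] Ht]].
  { apply sqrt_lt_R0. lra. }
  rewrite IZR_Q in Ht.
  pose proof (cos_bound (nk k * th) (Hg k)).
  pose proof (Tdist_sq (nk k * th) (1/2)).
  assert (Tdist (nk k * th) (1 / 2) >= 0) by (unfold Tdist; apply Rle_ge, sqrt_pos).
  assert (sqrt (2 - 2 * cos (2 * PI * rr)) * sqrt (2 - 2 * cos (2 * PI * rr)) = 2 - 2 * cos (2 * PI * rr))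
    by (apply sqrt_sqrt; lra).
  pose proof (sqrt_pos (2 - 2 * cos (2 * PI * rr))).
  nra.
Qed.

Lemma part3 th : irrational th -> (forall k j, rr <= Rabs (nk k * th - IZR j - / 2)) ->
  ~ (exists m : nat -> Z, enumeration Qset m /\
       forall theta, irrational theta -> equidistributed (fun k => IZR (m k) * theta)).
Proof.
  intros Hirr Hg [m [[Hm _] He]].
  specialize (He th Hirr (/2 - rr / 2) (/2 + rr / 2)).
  assert (Hrr : 0 < rr) by (unfold rr; lra).
  assert (Hr1 : rr < 1) by (unfold rr; lra).
  specialize (He ltac:(lra) ltac:(lra) ltac:(lra)).
  assert (H0 : forall N, count_in (fun k => IZR (m k) * th) (/2 - rr / 2) (/2 + rr / 2) N = 0%nat).
  { induction N; simpl; auto. rewrite IHN.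
    destruct (Rle_dec (/ 2 - rr / 2) (frac_part (IZR (m N) * th))); auto.
    destruct (Rlt_dec (frac_part (IZR (m N) * th)) (/ 2 + rr / 2)); auto.
    exfalso. destruct (Hm N) as [k Ek]. rewrite Ek, IZR_Q in r, r0.
    specialize (Hg k (Int_part (nk k * th))). unfold frac_part in r, r0.
    assert (Rabs (nk k * th - IZR (Int_part (nk k * th)) - / 2) < rr) by (apply Rabs_def1; lra).
    lra. }
  destruct (He (rr / 2)) as [N HN]. lra.
  specialize (HN N (Nat.le_refl N)). rewrite H0 in HN. simpl in HN.
  unfold R_dist in HN. unfold Rdiv in HN. rewrite Rmult_0_l in HN.
  rewrite Rabs_left in HN; lra.
Qed.

Theorem mainTheorem9 :
  Kazhdan_set Qset /\
  (exists theta, irrational theta /\ ~ dense_in_T Qset theta) /\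
  ~ (exists m : nat -> Z, enumeration Qset m /\
       forall theta, irrational theta ->
         equidistributed (fun k => IZR (m k) * theta)).
Proof.
  destruct good_theta as [th [Hirr Hg]].
  split; [apply kazhdan|]. split.
  - exists th. split; auto. apply part2; auto.
  - apply (part3 th Hirr Hg).
Qed.
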